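(* For any integer $k\ge0$, any $\alpha=\frac{p}{q}$ and any $\lambda\in\mathbb{R}$, $$\operatorname{tr}H^{2k+1}_{\alpha,\lambda,\frac12}R_{\frac12}=-\operatorname{tr}H^{2k+1}_{\alpha,\lambda,0}R_0,\qquad \operatorname{tr}H^{2k+1}_{\alpha,\lambda,\frac\alpha2}R_{\frac\alpha2}=\operatorname{tr}H^{2k+1}_{\alpha,\lambda,\frac{1+\alpha}2}R_{\frac{1+\alpha}2}.$$
   Context: For $\alpha,\lambda,\theta\in\mathbb{R}$, $H_{\alpha,\lambda,\theta}$ on $\ell^2(\mathbb{Z})$ is $(H\psi)_n=\psi_{n+1}+\psi_{n-1}+2\lambda\cos(2\pi(n\alpha+\theta))\psi_n$; $A_{ij}$ denotes matrix entries in the standard basis. $R_0=R_{1/2}:(\psi_n)\mapsto(\psi_{-n})$ and $R_{\alpha/2}=R_{(1+\alpha)/2}:(\psi_n)\mapsto(\psi_{-1-n})$. The traces are defined as $\operatorname{tr}AR_\theta=\sum_{j\in\mathbb{Z}}A_{j,-j}$ for $\theta\in\{0,\frac12\}$ and $\sum_{j\in\mathbb{Z}}A_{j,-1-j}$ for $\theta\in\{\frac\alpha2,\frac{1+\alpha}2\}$, with $A=H^{2k+1}_{\alpha,\lambda,\theta}$ (finitely many nonzero terms). *)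

(* Defs.v *)
From Stdlib Require Import Reals ZArith Lia Lra.
Open Scope R_scope.

Definition amo_pot (alpha lambda theta : R) (n : Z) : R :=
  2 * lambda * cos (2 * PI * (IZR n * alpha + theta)).

(* Matrix entries (H^m)_{ij} of the m-th power of
   (H psi)_n = psi_{n+1} + psi_{n-1} + v_n psi_n, in the standard basis.
   Since H^(m+1) = H * H^m and H_{ik} = [k=i+1] + [k=i-1] + v_i [k=i],
   (H^(m+1))_{ij} = (H^m)_{i+1,j} + (H^m)_{i-1,j} + v_i (H^m)_{ij}. *)
Fixpoint amo_pow (alpha lambda theta : R) (m : nat) (i j : Z) : R :=
  match m with
  | O => if Z.eq_dec i j then 1 else 0
  | S m' => amo_pow alpha lambda theta m' (i + 1) j
            + amo_pow alpha lambda theta m' (i - 1) j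
            + amo_pot alpha lambda theta i * amo_pow alpha lambda theta m' i j
  end.

(* tr (A R_0) = tr (A R_{1/2}) = sum_{j in Z} A_{j,-j}.
   For A = H^m, A_{ij} = 0 whenever |i - j| > m, so all nonzero terms have
   |j| <= m; the sum is taken over j in [-m, m] (2m+1 terms). *)
Definition tr_R0 (A : Z -> Z -> R) (m : nat) : R :=
  sum_f_R0 (fun t => let j := (Z.of_nat t - Z.of_nat m)%Z in A j (- j)%Z)
           (2 * m)%nat.

(* tr (A R_{alpha/2}) = tr (A R_{(1+alpha)/2}) = sum_{j in Z} A_{j,-1-j};
   nonzero terms satisfy |2j+1| <= m, hence |j| <= m. *)
Definition tr_Ralpha (A : Z -> Z -> R) (m : nat) : R :=
  sum_f_R0 (fun t => let j := (Z.of_nat t - Z.of_nat m)%Z in A j (- 1 - j)%Z)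
           (2 * m)%nat.

(* Main.v *)
Require Import Defs.
From Stdlib Require Import Reals ZArith Lia Lra.
Open Scope R_scope.

Definition sg (n : Z) : R := if Z.even n then 1 else -1.

Lemma sg_S n : sg (n + 1) = - sg n.
Proof. unfold sg. rewrite Z.even_add. simpl. destruct (Z.even n); simpl; lra. Qed.

Lemma sg_P n : sg (n - 1) = - sg n.
Proof. unfold sg. rewrite Z.even_sub. simpl. destruct (Z.even n); simpl; lra. Qed.

Lemma sg_dbl n : sg (n + n) = 1.
Proof. unfold sg. rewrite Z.even_add. destruct (Z.even n); reflexivity. Qed.

Lemma pot_half a l th n : amo_pot a l (th + 1/2) n = - amo_pot a l th n.
Proof.
  unfold amo_pot.
  replace (2 * PI * (IZR n * a + (th + 1 / 2))) with (2 * PI * (IZR n * a + th) + PI) by field.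
  rewrite neg_cos. ring.
Qed.

Lemma pow_rel a l th m : forall i j,
  amo_pow a l (th + 1/2) m i j = (-1)^m * sg (i + j) * amo_pow a l th m i j.
Proof.
  induction m as [|m IH]; intros i j; simpl.
  - destruct (Z.eq_dec i j) as [->|]; [rewrite sg_dbl|]; ring.
  - rewrite !IH, pot_half.
    replace (i + 1 + j)%Z with ((i + j) + 1)%Z by ring.
    replace (i - 1 + j)%Z with ((i + j) - 1)%Z by ring.
    rewrite sg_S, sg_P. ring.
Qed.

Lemma sum_opp (f g : nat -> R) N : (forall t, f t = - g t) ->
  sum_f_R0 f N = - sum_f_R0 g N.
Proof. intros H; induction N; simpl; rewrite ?IHN, !H; ring. Qed.

Lemma sum_eq' (f g : nat -> R) N : (forall t, f t = g t) ->
  sum_f_R0 f N = sum_f_R0 g N.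
Proof. intros H; induction N; simpl; rewrite ?IHN, !H; ring. Qed.

Theorem lemmap (k : nat) (p : Z) (q : Z) (hq : (q <> 0)%Z) (lambda : R) :
  let alpha := IZR p / IZR q in
  let m := (2 * k + 1)%nat in
  tr_R0 (amo_pow alpha lambda (1/2) m) m
    = - tr_R0 (amo_pow alpha lambda 0 m) m
  /\
  tr_Ralpha (amo_pow alpha lambda (alpha / 2) m) m
    = tr_Ralpha (amo_pow alpha lambda ((1 + alpha) / 2) m) m.
Proof.
  intros alpha m.
  assert (Hm : (-1)^m = -1).
  { unfold m. rewrite pow_add, pow_mult. simpl. rewrite Rmult_1_r.
    replace (-1 * -1) with 1 by ring. rewrite pow1. ring. }
  split.
  - unfold tr_R0. apply sum_opp. intro t. cbv zeta.
    replace (1/2) with (0 + 1/2) by ring. rewrite pow_rel, Hm.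
    replace (Z.of_nat t - Z.of_nat m + - (Z.of_nat t - Z.of_nat m))%Z with 0%Z by ring.
    unfold sg; simpl. ring.
  - unfold tr_Ralpha. apply sum_eq'. intro t. cbv zeta.
    replace ((1 + alpha) / 2) with (alpha / 2 + 1/2) by field. rewrite pow_rel, Hm.
    replace (Z.of_nat t - Z.of_nat m + (-1 - (Z.of_nat t - Z.of_nat m)))%Z with (-1)%Z by ring.
    unfold sg; simpl. ring.
Qed.
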